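(* Let $c>0$ (and $s>0$, $F>1$) be constants. There exists a constant $\alpha_1>0$ depending only on $c$ such that at every time $t$, $$\mathbb E[Z^{t+1}-Z^t\mid x^t,\lambda^t]\ge -\Pr[B\mid x^t,\lambda^t]\cdot\alpha_1(1+\log\lambda^t).$$
   Context: Consider the SA-$(1,\lambda)$-EA on a dynamic monotone function: a function $f:\{0,1\}^n\to\mathbb R$ is monotone if $f(x)>f(y)$ whenever $x\ne y$ and $x_i\ge y_i$ for all $i$; $(f^t)_{t\ge0}$ is a sequence of monotone functions, $f^t$ possibly chosen adversarially depending on $x^t$. The algorithm (with constants $c>0$, $s>0$, $F>1$) maintains $x^t\in\{0,1\}^n$, real $\lambda^t\ge1$; in generation $t$ it creates $\lfloor\lambda^t\rceil$ (nearest integer) offspring, each independently by flipping every bit of $x^t$ independently with probability $c/n$; $x^{t+1}$ is an offspring maximizing $f^t$ (ties uniformly at random); $\lambda^{t+1}=\max\{1,\lambda^t/F\}$ if $f^t(x^{t+1})>f^t(x^t)$, else $\lambda^{t+1}=F^{1/s}\lambda^t$. $Z^t$ is the number of zero-bits of $x^t$. $B$ is the event that some offspring of $x^t$ flips at least one zero-bit of $x^t$. $\log$ is the natural logarithm. *)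

(* Defs.v *)
From HB Require Import structures.
From mathcomp Require Import all_boot all_order all_algebra.
From mathcomp Require Import reals exp.
Set Implicit Arguments. Unset Strict Implicit. Unset Printing Implicit Defensive.
Import Order.TTheory GRing.Theory Num.Theory.
Local Open Scope ring_scope.

Section SAEA.
Variable R : realType.

Definition bits (n : nat) := {ffun 'I_n -> bool}.

Definition zeros n (x : bits n) : nat := #|[set j | ~~ x j]|.

Definition monotone_fun n (f : bits n -> R) : Prop :=
  forall x y : bits n, x != y -> (forall i, y i ==> x i) -> f y < f x.

(* nearest integer (ties rounded up), as a nat *)
Definition round_nat (l : R) : nat := Num.truncn (l + 1 / 2).

(* probability that standard bit mutation with rate c/n turns x into y *)
Definition mut_prob (c : R) n (x y : bits n) : R :=
  \prod_(j < n) (if x j == y j then 1 - c / n%:R else c / n%:R).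

Definition off_prob (c : R) n k (x : bits n) (ys : {ffun 'I_k -> bits n}) : R :=
  \prod_(i < k) mut_prob c x (ys i).

Definition best n k (f : bits n -> R) (ys : {ffun 'I_k -> bits n}) : {set 'I_k} :=
  [set i | [forall j, f (ys j) <= f (ys i)]].

(* E[Z^{t+1} - Z^t | x^t = x, lambda^t], with k = round(lambda) offspring,
   selection of a best offspring with ties broken uniformly at random *)
Definition drift (c : R) n k (f : bits n -> R) (x : bits n) : R :=
  \sum_(ys : {ffun 'I_k -> bits n})
     off_prob c x ys *
     (\sum_(i in best f ys) ((zeros (ys i))%:R - (zeros x)%:R) / #|best f ys|%:R).

(* event B: some offspring flips at least one zero-bit of x *)
Definition flipsZero n k (x : bits n) (ys : {ffun 'I_k -> bits n}) : bool :=
  [exists i, exists j, ~~ x j && ys i j].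

Definition probB (c : R) n k (x : bits n) : R :=
  \sum_(ys : {ffun 'I_k -> bits n})
     off_prob c x ys * (if flipsZero x ys then 1 else 0).

End SAEA.

(* Main.v *)
Require Import Defs.
From HB Require Import structures.
From mathcomp Require Import all_boot all_order all_algebra.
From mathcomp Require Import reals exp sequences.
From mathcomp Require Import ring lra.
Import Order.TTheory GRing.Theory Num.Theory.
Set Implicit Arguments. Unset Strict Implicit.
Local Open Scope ring_scope.

Section H.
Variable R : realType.

Lemma sum_ffun_prod (I J : finType) (F : I -> J -> R) :
  \sum_(f : {ffun I -> J}) \prod_i F i (f i) = \prod_i \sum_j F i j.
Proof. by rewrite bigA_distr_bigA. Qed.

Lemma E_prod (c : R) n (x : bits n) (g : bool -> bool -> R) :
  \sum_(y : bits n) mut_prob c x y * \prod_j g (x j) (y j) =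
  \prod_j ((1 - c / n%:R) * g (x j) (x j) + c / n%:R * g (x j) (~~ x j)).
Proof.
transitivity (\sum_(y : {ffun 'I_n -> bool})
   \prod_j ((if x j == y j then 1 - c / n%:R else c / n%:R) * g (x j) (y j))).
  by apply: eq_bigr => y _; rewrite /mut_prob big_split.
rewrite (@sum_ffun_prod _ _ (fun j b => (if x j == b then 1 - c / n%:R else c / n%:R) * g (x j) b)).
apply: eq_bigr => j _; rewrite big_bool /=.
by case: (x j) => //=; rewrite addrC.
Qed.

Lemma E_tuple (c : R) n k (x : bits n) (H : 'I_k -> bits n -> R) :
  \sum_(ys : {ffun 'I_k -> bits n}) off_prob c x ys * \prod_i H i (ys i) =
  \prod_i \sum_(y : bits n) mut_prob c x y * H i y.
Proof.
transitivity (\sum_(ys : {ffun 'I_k -> bits n}) \prod_i (mut_prob c x (ys i) * H i (ys i))).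
  by apply: eq_bigr => ys _; rewrite /off_prob big_split.
by rewrite (@sum_ffun_prod _ _ (fun i y => mut_prob c x y * H i y)).
Qed.


Definition Wc n (x y : bits n) : nat := #|[set j | ~~ x j && y j]|.
Definition pw (A : R) n (x y : bits n) : R := \prod_j (if ~~ x j && y j then A else 1).

Lemma pwE (A : R) n (x y : bits n) : pw A x y = A ^+ Wc x y.
Proof. by rewrite /pw -big_mkcond /= prodr_const /Wc cardsE. Qed.

Lemma zeros_prod (r : R) n (x : bits n) :
  \prod_j (if ~~ x j then r else 1) = r ^+ zeros x.
Proof. by rewrite -big_mkcond /= prodr_const /zeros cardsE. Qed.

Lemma E_pw (c A : R) n (x : bits n) :
  \sum_(y : bits n) mut_prob c x y * pw A x y =
  (1 - c / n%:R + c / n%:R * A) ^+ zeros x.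
Proof.
have := E_prod c x (fun a b => if ~~ a && b then A else 1); rewrite /pw => ->.
rewrite -zeros_prod; apply: eq_bigr => j _.
by case: (x j) => /=; ring.
Qed.

Lemma E_one (c : R) n (x : bits n) :
  \sum_(y : bits n) mut_prob c x y = 1.
Proof.
have := E_pw c 1 x.
rewrite /pw (_ : 1 - c / n%:R + c / n%:R * 1 = 1); last by ring.
rewrite expr1n => <-; apply: eq_bigr => y _.
by rewrite big1 ?mulr1 // => j _; case: ifP.
Qed.

Lemma E_const (c : R) n k (x : bits n) :
  \sum_(ys : {ffun 'I_k -> bits n}) off_prob c x ys = 1.
Proof.
transitivity (\sum_(ys : {ffun 'I_k -> bits n}) off_prob c x ys * \prod_(i < k) (fun _ _ => (1:R)) i (ys i)).
  by apply: eq_bigr => ys _; rewrite big1 ?mulr1.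
rewrite (E_tuple c x (fun _ _ => 1)); apply: big1 => i _.
under eq_bigr do rewrite mulr1.
exact: E_one.
Qed.

Lemma E_all (c A : R) n k (x : bits n) :
  \sum_(ys : {ffun 'I_k -> bits n}) off_prob c x ys * \prod_i pw A x (ys i) =
  ((1 - c / n%:R + c / n%:R * A) ^+ zeros x) ^+ k.
Proof.
rewrite (E_tuple c x (fun _ y => pw A x y)).
by rewrite (eq_bigr _ (fun i _ => E_pw c A x)) prodr_const card_ord.
Qed.

Lemma E_marg (c : R) n k (x : bits n) (h : bits n -> R) (i0 : 'I_k) :
  \sum_(ys : {ffun 'I_k -> bits n}) off_prob c x ys * h (ys i0) =
  \sum_(y : bits n) mut_prob c x y * h y.
Proof.
have := E_tuple c x (fun i y => if i == i0 then h y else 1).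
rewrite [in X in _ = X -> _](bigD1 i0) //= eqxx.
rewrite [X in _ = _ * X -> _]big1 ?mulr1; last first.
  move=> i /negbTE ->; under eq_bigr do rewrite mulr1; exact: E_one.
move=> <-; apply: eq_bigr => ys _.
by rewrite (bigD1 i0) //= eqxx big1 ?mulr1 // => i /negbTE ->.
Qed.



Lemma pw0_eq0 n (x y : bits n) j : ~~ x j && y j -> pw (0:R) x y = 0.
Proof. by move=> h; rewrite /pw (bigD1 j) //= h mul0r. Qed.

Lemma pw_ge0 (A : R) n (x y : bits n) : 0 <= A -> 0 <= pw A x y.
Proof. by move=> hA; rewrite pwE exprn_ge0. Qed.

Lemma pw0_01 n (x y : bits n) : 0 <= pw (0:R) x y <= 1.
Proof. by rewrite pwE expr0n; case: (Wc x y == 0%N) => /=; rewrite ?lexx ?ler01. Qed.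

Lemma indicB k n (x : bits n) (ys : {ffun 'I_k -> bits n}) :
  (if flipsZero x ys then 1 else 0 : R) = 1 - \prod_i pw 0 x (ys i).
Proof.
rewrite /flipsZero; case: existsP => [[i /existsP [j hj]]|hn].
  by rewrite (bigD1 i) //= (pw0_eq0 hj) mul0r subr0.
rewrite big1 ?subrr // => i _; rewrite /pw big1 // => j _.
case: ifP => // hj; exfalso; apply: hn; exists i; apply/existsP; by exists j.
Qed.

Lemma zeros_le n (x y : bits n) : (zeros x <= zeros y + Wc x y)%N.
Proof.
rewrite /zeros /Wc; apply: leq_trans (leq_card_setU _ _).
apply: subset_leq_card; apply/subsetP => j; rewrite !inE.
by case: (x j); case: (y j).
Qed.

Lemma W_bound (w : nat) (K : R) : 1 <= K ->
  w%:R <= ln K * (0 < w)%N%:R + K^-1 * ((2 * expR 1) ^+ w - (expR 1) ^+ w).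
Proof.
move=> K1; have Kp : 0 < K by apply: lt_le_trans K1.
have lK : 0 <= ln K by apply: ln_ge0.
have iK : 0 <= K^-1 by rewrite invr_ge0 ltW.
have e0 : 0 <= expR 1 ^+ w :> R by rewrite exprn_ge0 // expR_ge0.
have t1 : 1 <= 2 ^+ w :> R by rewrite exprn_ege1 // ler1n.
have hd : 0 <= (2 * expR 1) ^+ w - (expR 1) ^+ w :> R.
  by rewrite exprMn; nra.
have hm := mulr_ge0 iK hd.
case: w e0 t1 hd hm => [|w] e0 t1 hd hm; first by rewrite /= mulr0 add0r.
rewrite /= mulr1.
case: (lerP (w.+1%:R) (ln K)) => h; first by lra.
have eK : K < expR 1 ^+ w.+1.
  by rewrite -expRM_natl mulr1 -[X in X < _]lnK ?ltr_expR // posrE.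
have t2 : (w.+2)%:R <= 2 ^+ w.+1 :> R.
  by rewrite -natrX ler_nat ltn_expl.
have h1 : w.+1%:R * K <= (2 ^+ w.+1 - 1) * expR 1 ^+ w.+1 :> R.
  have : w.+2%:R = w.+1%:R + 1 :> R by rewrite -natr1.
  nra.
have : w.+1%:R <= K^-1 * ((2 * expR 1) ^+ w.+1 - expR 1 ^+ w.+1).
  rewrite exprMn (_ : 2 ^+ w.+1 * expR 1 ^+ w.+1 - expR 1 ^+ w.+1 = (2 ^+ w.+1 - 1) * expR 1 ^+ w.+1); last by ring.
  apply: le_trans (ler_wpM2l iK h1).
  by rewrite mulrCA mulVf ?mulr1 // gt_eqF.
lra.
Qed.


Definition Gf k n (x : bits n) (ys : {ffun 'I_k -> bits n}) (K : R) : R :=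
  ln K * (1 - \prod_i pw 0 x (ys i)) +
  K^-1 * \sum_i (pw (2 * expR 1) x (ys i) - pw (expR 1) x (ys i)).

Lemma pwd_ge0 n (x y : bits n) :
  0 <= pw (2 * expR 1) x y - pw (expR 1) x y :> R.
Proof.
rewrite !pwE exprMn.
have e0 : 0 <= expR 1 ^+ Wc x y :> R by rewrite exprn_ge0 // expR_ge0.
have t1 : 1 <= 2 ^+ Wc x y :> R by rewrite exprn_ege1 // ler1n.
nra.
Qed.

Lemma inner_bound k n (f : bits n -> R) (x : bits n)
  (ys : {ffun 'I_k -> bits n}) (K : R) : 1 <= K ->
  - Gf x ys K <= \sum_(i in best f ys)
       ((zeros (ys i))%:R - (zeros x)%:R) / #|best f ys|%:R.
Proof.
move=> K1; have Kp : 0 < K by apply: lt_le_trans K1.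
have lK : 0 <= ln K by apply: ln_ge0.
have iK : 0 <= K^-1 by rewrite invr_ge0 ltW.
have P1 : 0 <= 1 - \prod_i pw (0:R) x (ys i).
  by rewrite subr_ge0; apply: prodr_ile1 => i _; apply: pw0_01.
have S0 : 0 <= \sum_i (pw (2 * expR 1) x (ys i) - pw (expR 1) x (ys i)) :> R.
  by apply: sumr_ge0 => i _; apply: pwd_ge0.
have G0 : 0 <= Gf x ys K.
  by rewrite /Gf; apply: addr_ge0; apply: mulr_ge0.
have Hi : forall i, - Gf x ys K <= (zeros (ys i))%:R - (zeros x)%:R.
  move=> i.
  have hz : (zeros x)%:R <= (zeros (ys i))%:R + (Wc x (ys i))%:R :> R.
    by rewrite -natrD ler_nat zeros_le.
  have hW := W_bound (Wc x (ys i)) K1; rewrite -!pwE in hW.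
  have hA : ln K * (0 < Wc x (ys i))%N%:R <= ln K * (1 - \prod_i0 pw (0:R) x (ys i0)).
    apply: ler_wpM2l => //.
    case hw: (0 < Wc x (ys i))%N => //=.
    move: hw; rewrite /Wc card_gt0 => /set0Pn [j]; rewrite inE => hj.
    by rewrite (bigD1 i) //= (pw0_eq0 hj) mul0r subr0.
  have hB : K^-1 * (pw (2 * expR 1) x (ys i) - pw (expR 1) x (ys i)) <=
            K^-1 * \sum_i0 (pw (2 * expR 1) x (ys i0) - pw (expR 1) x (ys i0)).
    apply: ler_wpM2l => //.
    rewrite (bigD1 i) //= lerDl.
    by apply: sumr_ge0 => i0 _; apply: pwd_ge0.
  rewrite /Gf; lra.
case hN: (#|best f ys| == 0)%N.
  rewrite (eqP hN) invr0 big1 ?oppr_le0 // => i _.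
  by rewrite mulr0.
apply: le_trans (ler_sum _ (fun i _ => ler_wpM2r _ (Hi i))); last first.
  by rewrite invr_ge0.
by rewrite sumr_const -(mulr_natr (- Gf x ys K / _)) divfK // pnatr_eq0 hN.
Qed.


Lemma EG (c : R) k n (x : bits n) (K : R) :
  \sum_(ys : {ffun 'I_k -> bits n}) off_prob c x ys * Gf x ys K =
  ln K * (1 - ((1 - c / n%:R + c / n%:R * 0) ^+ zeros x) ^+ k) +
  K^-1 * (k%:R * ((1 - c / n%:R + c / n%:R * (2 * expR 1)) ^+ zeros x
                 - (1 - c / n%:R + c / n%:R * expR 1) ^+ zeros x)).
Proof.
rewrite /Gf; under eq_bigr do rewrite mulrDr.
rewrite big_split /=; congr (_ + _).
  under eq_bigr do rewrite mulrCA mulrBr mulr1.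
  by rewrite -mulr_sumr sumrB E_const E_all.
under eq_bigr do rewrite mulrCA mulr_sumr.
rewrite -mulr_sumr exchange_big /=; congr (_ * _).
under eq_bigr => i _.
  under eq_bigr do rewrite mulrBr.
  rewrite sumrB (E_marg c x (pw (2 * expR 1) x)) (E_marg c x (pw (expR 1) x)).
  rewrite !E_pw.
  over.
rewrite sumr_const (_ : #|_| = k) ?mulr_natl //; exact: card_ord.

Qed.


Lemma powdiff (a b : R) m : 1 <= b -> b <= a ->
  a ^+ m - b ^+ m <= m%:R * (a - b) * a ^+ m.
Proof.
move=> b1 ba; elim: m => [|m IH]; first by rewrite !expr0 subrr mul0r mul0r.
have a0 : 0 <= a by lra.
have b0 : 0 <= b by lra.
have u1 : 1 <= a ^+ m by rewrite exprn_ege1 // (le_trans b1).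
have vu : b ^+ m <= a ^+ m by rewrite lerXn2r // nnegrE.
rewrite !exprS.
set u := a ^+ m in IH u1 vu *; set v := b ^+ m in IH vu *.
have h1 : a * (u - v) <= a * (m%:R * (a - b) * u) by apply: ler_wpM2l.
have h2 : (a - b) * v <= (a - b) * u by apply: ler_wpM2l; lra.
have h3 : (a - b) * u <= (a - b) * u * a.
  rewrite -[X in X <= _]mulr1; apply: ler_wpM2l; [apply: mulr_ge0; lra | lra].
rewrite -[m.+1]addn1 natrD; lra.
Qed.


Lemma final_ineq (c N lam : R) (Z k : nat) :
  0 < c -> c <= N -> Z%:R <= N -> k%:R <= lam + 1 / 2 -> 1 <= lam ->
  ln (1 + k%:R * c) * (1 - ((1 - c / N + c / N * 0) ^+ Z) ^+ k) +
  (1 + k%:R * c)^-1 * (k%:R * ((1 - c / N + c / N * (2 * expR 1)) ^+ Z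
                               - (1 - c / N + c / N * expR 1) ^+ Z))
  <= (1 - ((1 - c / N + c / N * 0) ^+ Z) ^+ k) *
     ((ln (2 * (1 + c)) + expR 1 * expR (c * (2 * expR 1 - 1)) + 1) * (1 + ln lam)).
Proof.
move=> c0 cN ZN kl l1.
set q := c / N; set E0 := expR (c * (2 * expR 1 - 1)).
have N0 : 0 < N by apply: lt_le_trans cN.
have q0 : 0 < q by rewrite /q divr_gt0.
have q1 : q <= 1 by rewrite /q ler_pdivrMr // mul1r.
have e2 : 2 <= expR 1 :> R by have := expR_ge1Dx (1:R); lra.
have Z0 : 0 <= Z%:R :> R by [].
have k0 : 0 <= k%:R :> R by [].
set kk := k%:R in kl k0 *.
set p := Z%:R * q.
have p0 : 0 <= p by rewrite /p mulr_ge0 // ltW.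
have pc : p <= c.
  rewrite /p /q mulrA ler_pdivrMr //.
  by rewrite mulrC ler_wpM2l // ltW.
have kp0 : 0 <= kk * p by apply: mulr_ge0.
rewrite (_ : 1 - q + q * 0 = 1 - q); last by ring.
set Y := (1 - q) ^+ Z ^+ k.
have Y0 : 0 <= Y by rewrite /Y !exprn_ge0 // subr_ge0.
have hYe : Y <= (1 + kk * p)^-1.
  rewrite /Y -exprM.
  have h1 : (1 - q) ^+ (Z * k) <= expR (- q) ^+ (Z * k).
    rewrite lerXn2r // ?nnegrE ?subr_ge0 ?expR_ge0 //.
    by have := expR_ge1Dx (- q); lra.
  apply: le_trans h1 _.
  rewrite -expRM_natl (_ : (Z * k)%:R * - q = - (kk * p)); last first.
    by rewrite natrM /kk /p; ring.
  rewrite expRN lef_pV2 ?posrE ?expR_gt0 //; last by lra.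
  by have := expR_ge1Dx (kk * p); lra.
set X1 := 1 - q + q * (2 * expR 1); set X2 := 1 - q + q * expR 1.
have X21 : 1 <= X2 by rewrite /X2; nra.
have X12 : X2 <= X1 by rewrite /X1 /X2; nra.
have hD1 := powdiff Z X21 X12.
have hX1 : X1 ^+ Z <= E0.
  have h1 : X1 <= expR (q * (2 * expR 1 - 1)).
    by have := expR_ge1Dx (q * (2 * expR 1 - 1)); rewrite /X1; lra.
  apply: le_trans (lerXn2r Z _ _ h1) _; rewrite ?nnegrE ?expR_ge0 //; first by lra.
  rewrite -expRM_natl ler_expR /E0 mulrA -/p.
  by apply: ler_wpM2r => //; lra.
have XX : X1 - X2 = q * expR 1 by rewrite /X1 /X2; ring.
have hD : X1 ^+ Z - X2 ^+ Z <= p * expR 1 * E0.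
  apply: le_trans hD1 _; rewrite XX mulrA -/p.
  apply: ler_wpM2l => //; apply: mulr_ge0 => //; exact: expR_ge0.
have E00 : 0 <= E0 by exact: expR_ge0.
have ee0 : 0 <= expR 1 * E0 by apply: mulr_ge0 => //; exact: expR_ge0.
set K := 1 + kk * c.
have K1 : 1 + kk * p <= K by rewrite /K; apply: lerD => //; apply: ler_wpM2l.
have Kp : 0 < K by lra.
have hK : K^-1 <= (1 + kk * p)^-1 by rewrite lef_pV2 ?posrE //; lra.
have iK0 : 0 <= K^-1 by rewrite invr_ge0 ltW.
have hsec : K^-1 * (kk * (X1 ^+ Z - X2 ^+ Z)) <= (1 - Y) * (expR 1 * E0).
  have s1 : K^-1 * (kk * (X1 ^+ Z - X2 ^+ Z)) <= K^-1 * (kk * p * (expR 1 * E0)).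
    apply: ler_wpM2l => //; rewrite -mulrA; apply: ler_wpM2l => //.
    by rewrite mulrA.
  apply: le_trans s1 _.
  have s2 : K^-1 * (kk * p * (expR 1 * E0)) <= (1 + kk * p)^-1 * (kk * p * (expR 1 * E0)).
    apply: ler_wpM2r => //; apply: mulr_ge0 => //.
  apply: le_trans s2 _.
  rewrite mulrA; apply: ler_wpM2r => //.
  have : (1 + kk * p)^-1 * (kk * p) = 1 - (1 + kk * p)^-1.
    by field; lra.
  move=> ->; lra.
have lK : ln K <= ln (2 * (1 + c)) + ln lam.
  rewrite -lnM ?posrE; [|lra|lra].
  rewrite ler_ln ?posrE; [|lra|nra].
  rewrite /K.
  have : kk * c <= (lam + 1 / 2) * c by apply: ler_wpM2r => //; lra.
  nra.
have lam0 : 0 <= ln lam by apply: ln_ge0.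
have L0 : 0 <= ln (2 * (1 + c)) by apply: ln_ge0; lra.
have hY1 : 0 <= 1 - Y.
  suff : (1 + kk * p)^-1 <= 1 by lra.
  by rewrite invr_le1 ?unitfE ?posrE; lra.
have hfirst : ln K * (1 - Y) <= (ln (2 * (1 + c)) + ln lam) * (1 - Y).
  by apply: ler_wpM2r => //; lra.
have ha : ln (2 * (1 + c)) + ln lam + expR 1 * E0 <=
          (ln (2 * (1 + c)) + expR 1 * E0 + 1) * (1 + ln lam).
  nra.
have := ler_wpM2l hY1 ha.
lra.
Qed.



End H.

Lemma off_prob_ge0 (R : realType) (c : R) n k (x : bits n) (ys : {ffun 'I_k -> bits n}) :
  0 < c -> c <= n%:R -> 0 <= off_prob c x ys.
Proof.
move=> c0 cn.
have N0 : 0 < n%:R :> R by apply: lt_le_trans cn.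
have q0 : 0 <= c / n%:R by rewrite divr_ge0 // ltW.
have q1 : c / n%:R <= 1 by rewrite ler_pdivrMr // mul1r.
apply: prodr_ge0 => i _; apply: prodr_ge0 => j _.
by case: ifP => _ //; rewrite subr_ge0.
Qed.

Theorem mainTheorem17 (R : realType) (c : R) :
  0 < c ->
  exists alpha1 : R, 0 < alpha1 /\
    forall (s F : R), 0 < s -> 1 < F ->
    forall (n : nat) (x : bits n) (lam : R) (f : bits n -> R),
      c <= n%:R -> 1 <= lam -> monotone_fun f ->
      - probB c (round_nat lam) x * (alpha1 * (1 + ln lam))
        <= drift c (round_nat lam) f x.
Proof.
move=> c0.
exists (ln (2 * (1 + c)) + expR 1 * expR (c * (2 * expR 1 - 1)) + 1); split.
  have L0 : 0 <= ln (2 * (1 + c)) by apply: ln_ge0; lra.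
  have : 0 <= expR 1 * expR (c * (2 * expR 1 - 1)) :> R.
    by apply: mulr_ge0; apply: expR_ge0.
  lra.
move=> s F _ _ n x lam f cn l1 _.
set k := round_nat lam.
have K1 : 1 <= 1 + k%:R * c.
  have : 0 <= k%:R * c by apply: mulr_ge0 => //; apply: ltW.
  lra.
have hdr : - (\sum_(ys : {ffun 'I_k -> bits n}) off_prob c x ys * Gf x ys (1 + k%:R * c))
           <= drift c k f x.
  rewrite /drift -sumrN; apply: ler_sum => ys _; rewrite -mulrN.
  apply: ler_wpM2l; first exact: off_prob_ge0.
  exact: inner_bound.
rewrite EG in hdr.
have hpB : probB c k x = 1 - ((1 - c / n%:R + c / n%:R * 0) ^+ zeros x) ^+ k.
  rewrite /probB; under eq_bigr do rewrite indicB mulrBr mulr1.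
  by rewrite sumrB E_const E_all.
have hZ : (zeros x)%:R <= n%:R :> R.
  by rewrite ler_nat /zeros (leq_trans (max_card _)) // card_ord.
have hk : k%:R <= lam + 1 / 2.
  by rewrite /k /round_nat truncn_le; lra.
have := final_ineq c0 cn hZ hk l1.
rewrite hpB; lra.
Qed.
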